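(* Fix an initial exchange matrix $B^0$ and initial coefficients $p_1,\dots,p_n\in\mathbb P$. For all $v,v'\in\mathbb T^n$ and $i,j\in[1,n]$, one has $Y_{i;v}=Y_{j;v'}$ if and only if $\widetilde Y_{i;v}=\widetilde Y_{j;v'}$. That is, the $Y$-pattern $v\mapsto((Y_{1;v},\dots,Y_{n;v}),B_v)$ and the $Y$-pattern with coefficients $v\mapsto((\widetilde Y_{1;v},\dots,\widetilde Y_{n;v}),\mathbf p_v,B_v)$ have the same periodicities.
   Context: A semifield $(\mathbb P,\oplus,\cdot,1)$ satisfies the field axioms except that $\oplus$ need not have a neutral element or inverses; $p^+=p/(p\oplus1)$, $p^-=1/(p\oplus1)$, $p^{[\![x]\!]}=p^-,1,p^+$ according as $x<0,=0,>0$. $\mathbb Q_{\mathrm{sf}}(S)$ is the universal semifield of subtraction-free rational functions in $S$ (any map from $S$ to a semifield extends uniquely to a semifield morphism). $\mathbb Q\mathbb P$ is the fraction field of the group ring $\mathbb Z\mathbb P$; $\mathbb Q\mathbb P_{\mathrm{sf}}(u_1,\dots,u_n)$ is the semifield of ratios of nonzero polynomials in $u_i$ with coefficients nonnegative integer combinations of elements of $\mathbb P$. Matrix mutation: $b'_{ij}=-b_{ij}$ if $i=k$ or $j=k$, else $b_{ij}+\operatorname{sgn}(b_{ik})[b_{ik}b_{kj}]_+$. $Y$-seed mutation: $y'_k=y_k^{-1}$, $y'_j=y_j(1\oplus y_k^{-\operatorname{sgn}(b_{kj})})^{-b_{kj}}$. $Y$-seed with coefficients $(\mathbf y,\mathbf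 p,B)$ ($\mathbf p$ in $\mathbb P$, $\mathbf y$ in $\mathbb Q\mathbb P_{\mathrm{sf}}(u)$) mutates by $Y$-seed mutation of $(\mathbf p,B)$, $y'_k=y_k^{-1}$, $y'_j=y_j\big(p_k^{[\![b_{kj}]\!]}+p_k^{[\![-b_{kj}]\!]}y_k^{-\operatorname{sgn}(b_{kj})}\big)^{-b_{kj}}$ for $j\ne k$. Patterns are assignments of seeds to vertices of the $n$-regular edge-labeled tree $\mathbb T^n$ with initial vertex $v_0$, compatible with mutation along edges. $Y_{j;v}\in\mathbb Q_{\mathrm{sf}}(y_1,\dots,y_n)$: components of the $Y$-pattern with initial seed $((y_1,\dots,y_n),B^0)$ at $v_0$. $\widetilde Y_{j;v}\in\mathbb Q\mathbb P_{\mathrm{sf}}(y_1,\dots,y_n)$, $\mathbf p_v$: components of the $Y$-pattern with coefficients with initial seed $((y_1,\dots,y_n),(p_1,\dots,p_n),B^0)$. *)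

(* Defs.v *)
From HB Require Import structures.
From mathcomp Require Import all_boot all_order all_algebra.
From Stdlib Require Import Permutation.
Set Implicit Arguments. Unset Strict Implicit. Unset Printing Implicit Defensive.
Import Order.TTheory GRing.Theory Num.Theory.
Local Open Scope ring_scope.

Record semifield := Semifield {
  sf_car :> Type;
  sf_add : sf_car -> sf_car -> sf_car;
  sf_mul : sf_car -> sf_car -> sf_car;
  sf_one : sf_car;
  sf_inv : sf_car -> sf_car;
  sf_mulA : forall x y z, sf_mul x (sf_mul y z) = sf_mul (sf_mul x y) z;
  sf_mulC : forall x y, sf_mul x y = sf_mul y x;
  sf_mul1 : forall x, sf_mul x sf_one = x;
  sf_mulV : forall x, sf_mul x (sf_inv x) = sf_one;
  sf_addA : forall x y z, sf_add x (sf_add y z) = sf_add (sf_add x y) z;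
  sf_addC : forall x y, sf_add x y = sf_add y x;
  sf_mulDl : forall x y z, sf_mul (sf_add x y) z = sf_add (sf_mul x z) (sf_mul y z)
}.

(* Bare semifield operations (used to run mutations in concrete models). *)
Record sfops := SFOps {
  o_car :> Type;
  o_add : o_car -> o_car -> o_car;
  o_mul : o_car -> o_car -> o_car;
  o_one : o_car;
  o_inv : o_car -> o_car
}.

Definition ops_of (P : semifield) : sfops :=
  @SFOps P (@sf_add P) (@sf_mul P) (@sf_one P) (@sf_inv P).

Definition o_expz (S : sfops) (x : S) (z : int) : S :=
  match z with
  | Posz m => iter m (o_mul x) (o_one S)
  | Negz m => o_inv (iter m.+1 (o_mul x) (o_one S))
  end.

Definition o_plus (S : sfops) (p : S) : S := o_mul p (o_inv (o_add p (o_one S))).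
Definition o_minus (S : sfops) (p : S) : S := o_inv (o_add p (o_one S)).
Definition o_brk (S : sfops) (p : S) (x : int) : S :=
  if x < 0 then o_minus p else if x == 0 then o_one S else o_plus p.

Definition skew_symmetrizable n (B : 'M[int]_n) : Prop :=
  exists d : 'I_n -> int, (forall i, 0 < d i) /\
    (forall i j, d i * B i j = - (d j * B j i)).

Definition mut_mx n (k : 'I_n) (B : 'M[int]_n) : 'M[int]_n :=
  \matrix_(i, j) if (i == k) || (j == k) then - B i j
                 else B i j + sgz (B i k) * Num.max (B i k * B k j) 0.

Definition mut_y (S : sfops) n (k : 'I_n) (B : 'M[int]_n) (y : 'I_n -> S)
  : 'I_n -> S :=
  fun j => if j == k then o_inv (y k)
           else o_mul (y j)
                  (o_expz (o_add (o_one S) (o_expz (y k) (- sgz (B k j))))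
                          (- B k j)).

(* The n-regular tree T^n: vertices are reduced words in 'I_n (no two
   consecutive letters equal); the word [k1;...;km] is the vertex reached
   from v0 by the path with edge labels k1, ..., km. *)
Definition reduced n (w : seq 'I_n) : bool := sorted (fun a b : 'I_n => a != b) w.

(* Q_sf(y_1,...,y_n): the universal (free) semifield on y_1..y_n, realised
   as terms modulo the congruence generated by the semifield axioms. *)
Inductive sfterm (n : nat) : Type :=
| TVar of 'I_n
| TOne
| TAdd of sfterm n & sfterm n
| TMul of sfterm n & sfterm n
| TInv of sfterm n.

Arguments TOne {n}.

Inductive sfeq (n : nat) : sfterm n -> sfterm n -> Prop :=
| sfeq_refl t : sfeq t t
| sfeq_sym t u : sfeq t u -> sfeq u t
| sfeq_trans t u v : sfeq t u -> sfeq u v -> sfeq t v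
| sfeq_add t t' u u' : sfeq t t' -> sfeq u u' -> sfeq (TAdd t u) (TAdd t' u')
| sfeq_mul t t' u u' : sfeq t t' -> sfeq u u' -> sfeq (TMul t u) (TMul t' u')
| sfeq_inv t t' : sfeq t t' -> sfeq (TInv t) (TInv t')
| sfeq_mulA x y z : sfeq (TMul x (TMul y z)) (TMul (TMul x y) z)
| sfeq_mulC x y : sfeq (TMul x y) (TMul y x)
| sfeq_mul1 x : sfeq (TMul x TOne) x
| sfeq_mulV x : sfeq (TMul x (TInv x)) TOne
| sfeq_addA x y z : sfeq (TAdd x (TAdd y z)) (TAdd (TAdd x y) z)
| sfeq_addC x y : sfeq (TAdd x y) (TAdd y x)
| sfeq_mulDl x y z : sfeq (TMul (TAdd x y) z) (TAdd (TMul x z) (TMul y z)).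

Definition Qsf_ops (n : nat) : sfops :=
  @SFOps (sfterm n) (@TAdd n) (@TMul n) TOne (@TInv n).

Definition Ypattern n (B0 : 'M[int]_n) (w : seq 'I_n)
  : ('I_n -> Qsf_ops n) * 'M[int]_n :=
  foldl (fun s k => (mut_y k s.2 s.1, mut_mx k s.2))
        ((fun i => TVar i : Qsf_ops n), B0) w.

Definition Y n (B0 : 'M[int]_n) (w : seq 'I_n) (i : 'I_n) : sfterm n :=
  (Ypattern B0 w).1 i.

(* QP_sf(u_1..u_n): ratios f/g of nonzero polynomials with coefficients in
   N P (nonnegative integer combinations of elements of P), with equality
   taken in the field QP(u) = Frac(ZP)(u), i.e. f g' = f' g in ZP[u].
   Such a polynomial is a finite multiset of terms p * u^a (p in P, a in N^n),
   represented by a list; equality in ZP[u] = Z[P x N^n] of two such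
   N-combinations is equality of multisets (Permutation). *)
Section QPsf.
Variables (P : semifield) (n : nat).

Definition mono := {ffun 'I_n -> nat}.
Definition qpoly := seq (P * mono)%type.

Definition mono_mul (a b : mono) : mono := [ffun i => (a i + b i)%N].
Definition mono1 : mono := [ffun => 0%N].
Definition mono_var (i : 'I_n) : mono := [ffun j => nat_of_bool (j == i)].

Definition qpoly_mul (f g : qpoly) : qpoly :=
  [seq (sf_mul a.1 b.1, mono_mul a.2 b.2) | a <- f, b <- g].
Definition qpoly_add (f g : qpoly) : qpoly := f ++ g.

(* elements of QP_sf(u): pairs (numerator, denominator), both nonempty *)
Definition qpsf := (qpoly * qpoly)%type.

Definition qp_eq (x y : qpsf) : Prop :=
  Permutation (qpoly_mul x.1 y.2) (qpoly_mul y.1 x.2).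

Definition qp_one : qpsf := ([:: (sf_one P, mono1)], [:: (sf_one P, mono1)]).
Definition qp_mul (x y : qpsf) : qpsf := (qpoly_mul x.1 y.1, qpoly_mul x.2 y.2).
Definition qp_inv (x : qpsf) : qpsf := (x.2, x.1).
Definition qp_add (x y : qpsf) : qpsf :=
  (qpoly_add (qpoly_mul x.1 y.2) (qpoly_mul y.1 x.2), qpoly_mul x.2 y.2).
Definition qp_const (p : P) : qpsf := ([:: (p, mono1)], [:: (sf_one P, mono1)]).
Definition qp_var (i : 'I_n) : qpsf :=
  ([:: (sf_one P, mono_var i)], [:: (sf_one P, mono1)]).

Definition QPsf_ops : sfops := @SFOps qpsf qp_add qp_mul qp_one qp_inv.

End QPsf.

Definition mut_yc (P : semifield) n (k : 'I_n)
  (s : ('I_n -> QPsf_ops P n) * ('I_n -> P) * 'M[int]_n)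
  : ('I_n -> QPsf_ops P n) * ('I_n -> P) * 'M[int]_n :=
  let: (y, p, B) := s in
  let y' := fun j : 'I_n =>
    if j == k then qp_inv (y k)
    else qp_mul (y j)
      (o_expz (S := QPsf_ops P n)
        (qp_add (qp_const n (o_brk (S := ops_of P) (p k) (B k j)))
                (qp_mul (qp_const n (o_brk (S := ops_of P) (p k) (- B k j)))
                        (o_expz (S := QPsf_ops P n) (y k) (- sgz (B k j)))))
        (- B k j)) in
  (y', mut_y (S := ops_of P) k B p, mut_mx k B).

Definition YCpattern (P : semifield) n (B0 : 'M[int]_n) (p0 : 'I_n -> P)
  (w : seq 'I_n) :=
  foldl (fun s k => mut_yc k s) ((fun i => qp_var P i), p0, B0) w.

Definition Ytil (P : semifield) n (B0 : 'M[int]_n) (p0 : 'I_n -> P)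
  (w : seq 'I_n) (i : 'I_n) : qpsf P n :=
  (YCpattern B0 p0 w).1.1 i.

(* Main.v *)
Require Import Defs.
From HB Require Import structures.
From mathcomp Require Import all_boot all_order all_algebra.
From mathcomp Require Import mpoly ring.
From Stdlib Require Import Setoid Morphisms Permutation.
Set Implicit Arguments. Unset Strict Implicit. Unset Printing Implicit Defensive.
Import Order.TTheory GRing.Theory Num.Theory.


Section SF.
Variable n : nat.
Local Notation T := (sfterm n).
Local Notation "x ~ y" := (@sfeq n x y) (at level 70).

Lemma sfeq_Equiv : Equivalence (@sfeq n).
Proof. split; [exact: sfeq_refl| exact: sfeq_sym| exact: sfeq_trans]. Qed.
Existing Instance sfeq_Equiv.
#[local] Hint Resolve sfeq_refl : core.
Instance TAdd_Proper : Proper (@sfeq n ==> @sfeq n ==> @sfeq n) (@TAdd n).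
Proof. by move=> ? ? ? ? ? ?; apply: sfeq_add. Qed.
Instance TMul_Proper : Proper (@sfeq n ==> @sfeq n ==> @sfeq n) (@TMul n).
Proof. by move=> ? ? ? ? ? ?; apply: sfeq_mul. Qed.
Instance TInv_Proper : Proper (@sfeq n ==> @sfeq n) (@TInv n).
Proof. by move=> ? ? ?; apply: sfeq_inv. Qed.

Lemma tmul1l (x : T) : TMul TOne x ~ x.
Proof. rewrite sfeq_mulC. exact: sfeq_mul1. Qed.
Lemma tmulCA (x y z : T) : TMul x (TMul y z) ~ TMul y (TMul x z).
Proof. by rewrite sfeq_mulA (sfeq_mulC x y) -sfeq_mulA. Qed.
Lemma tmulACA (x y z w : T) :
  TMul (TMul x y) (TMul z w) ~ TMul (TMul x z) (TMul y w).
Proof. by rewrite -!sfeq_mulA (tmulCA y z). Qed.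
Lemma tmulVl (x : T) : TMul (TInv x) x ~ TOne.
Proof. by rewrite sfeq_mulC sfeq_mulV. Qed.
Lemma tinv_uniq (x y : T) : TMul x y ~ TOne -> y ~ TInv x.
Proof.
move=> h. rewrite -(tmul1l y) -(tmulVl x) -sfeq_mulA h. exact: sfeq_mul1.
Qed.
Lemma tinv1 : TInv (TOne : T) ~ TOne.
Proof. symmetry; apply: tinv_uniq; exact: sfeq_mul1. Qed.
Lemma tinvM (x y : T) : TInv (TMul x y) ~ TMul (TInv x) (TInv y).
Proof.
symmetry; apply: tinv_uniq.
by rewrite tmulACA !sfeq_mulV sfeq_mul1.
Qed.
Lemma tinvK (x : T) : TInv (TInv x) ~ x.
Proof. symmetry; apply: tinv_uniq; exact: tmulVl. Qed.
Lemma tmulDr (x y z : T) : TMul x (TAdd y z) ~ TAdd (TMul x y) (TMul x z).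
Proof. by rewrite sfeq_mulC sfeq_mulDl (sfeq_mulC y) (sfeq_mulC z). Qed.

Lemma tmul_cancel (x y c : T) : TMul x c ~ TMul y c -> x ~ y.
Proof.
move=> h. rewrite -(sfeq_mul1 x) -(sfeq_mul1 y) -(sfeq_mulV c) !sfeq_mulA h.
reflexivity.
Qed.

Definition tdiv (x y : T) := TMul x (TInv y).
Instance tdiv_Proper : Proper (@sfeq n ==> @sfeq n ==> @sfeq n) tdiv.
Proof. by move=> ? ? h ? ? h'; rewrite /tdiv h h'. Qed.
Lemma tdiv_add (a b c d : T) :
  TAdd (tdiv a b) (tdiv c d) ~ tdiv (TAdd (TMul a d) (TMul c b)) (TMul b d).
Proof.
rewrite /tdiv sfeq_mulDl tinvM.
rewrite (tmulACA a d) sfeq_mulV sfeq_mul1.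
rewrite (sfeq_mulC (TInv b)) (tmulACA c b) sfeq_mulV sfeq_mul1.
reflexivity.
Qed.
Lemma tdiv_mul (a b c d : T) :
  TMul (tdiv a b) (tdiv c d) ~ tdiv (TMul a c) (TMul b d).
Proof. by rewrite /tdiv tinvM tmulACA. Qed.
Lemma tdiv_inv (a b : T) : TInv (tdiv a b) ~ tdiv b a.
Proof. by rewrite /tdiv tinvM tinvK sfeq_mulC. Qed.
Lemma tdiv_mulK (a b d : T) : TMul (tdiv a b) (TMul b d) ~ TMul a d.
Proof.
by rewrite /tdiv -sfeq_mulA (sfeq_mulA (TInv b)) tmulVl tmul1l.
Qed.
Lemma tdiv_eq (a b c d : T) : TMul a d ~ TMul c b -> tdiv a b ~ tdiv c d.
Proof.
move=> h; apply: (@tmul_cancel _ _ (TMul b d)).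
by rewrite tdiv_mulK (sfeq_mulC b d) tdiv_mulK.
Qed.

Definition Tpow (x : T) k := iter k (TMul x) TOne.
Lemma TpowD x k l : Tpow x (k + l) ~ TMul (Tpow x k) (Tpow x l).
Proof.
elim: k => [|k IH] /=; first by rewrite tmul1l.
by rewrite /Tpow /= -/(Tpow x _) IH sfeq_mulA.
Qed.

Definition Tmono_s (m : mono n) (s : seq 'I_n) :=
  foldr (fun i acc => TMul (Tpow (TVar i) (m i)) acc) TOne s.
Definition Tmono (m : mono n) := Tmono_s m (enum 'I_n).

Lemma Tmono_mul a b : Tmono (mono_mul a b) ~ TMul (Tmono a) (Tmono b).
Proof.
rewrite /Tmono; elim: (enum 'I_n) => [|i s IH] /=; first by rewrite sfeq_mul1.
by rewrite IH ffunE TpowD tmulACA.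
Qed.
Lemma Tmono1 : Tmono (mono1 n) ~ TOne.
Proof.
rewrite /Tmono; elim: (enum 'I_n) => [|i s IH] //=.
by rewrite IH ffunE tmul1l.
Qed.
Lemma Tmono_s_var i s : uniq s ->
  Tmono_s (mono_var i) s ~ (if i \in s then TVar i else TOne).
Proof.
elim: s => [|k s IH2] //= /andP[kns us].
rewrite ffunE IH2 // inE; case: (k =P i) => [ki|ne] /=.
- subst k; rewrite eqxx (negbTE kns) /Tpow /= !sfeq_mul1; done.
- have -> : (i == k) = false by apply/eqP => e; apply: ne; rewrite e.
  by rewrite /Tpow /= tmul1l.
Qed.
Lemma Tmono_var i : Tmono (mono_var i) ~ TVar i.
Proof. by rewrite /Tmono Tmono_s_var ?enum_uniq // mem_enum. Qed.

Fixpoint Tsum (s : seq (mono n)) : T :=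
  match s with
  | [::] => TOne
  | m :: s' => match s' with [::] => Tmono m | _ => TAdd (Tmono m) (Tsum s') end
  end.

Lemma Tsum_cons m s : s != [::] -> Tsum (m :: s) = TAdd (Tmono m) (Tsum s).
Proof. by case: s. Qed.

Lemma Tsum_perm s t : Permutation s t -> Tsum s ~ Tsum t.
Proof.
elim => [|x l l' p IH|x y l|l l' l'' _ IH1 _ IH2] //.
- case: l p IH => [|a l] p IH; first by rewrite (Permutation_nil p).
  case: l' p IH => [|b l'] p IH; first by move/Permutation_length: p.
  by rewrite (@Tsum_cons x) // (@Tsum_cons x) // IH.
- case: l => [|a l]; first by rewrite /= sfeq_addC.
  rewrite (@Tsum_cons y) // (@Tsum_cons x) // (@Tsum_cons x) // (@Tsum_cons y) //.
  rewrite sfeq_addA (sfeq_addC (Tmono y)) -sfeq_addA; done.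
- by rewrite IH1.
Qed.

Lemma Tsum_cat s t : s != [::] -> t != [::] ->
  Tsum (s ++ t) ~ TAdd (Tsum s) (Tsum t).
Proof.
elim: s => [|a s IH] // _ tn.
case: s IH => [|b s] IH; first by rewrite cat1s Tsum_cons.
rewrite cat_cons (@Tsum_cons a) // IH // (@Tsum_cons a) // sfeq_addA; done.
Qed.

Definition np_mul (f g : seq (mono n)) := [seq mono_mul a b | a <- f, b <- g].

Lemma np_mul_ne f g : f != [::] -> g != [::] -> np_mul f g != [::].
Proof. by rewrite -!size_eq0 size_allpairs muln_eq0 => /negbTE-> /negbTE->. Qed.

Lemma Tsum_map a g : g != [::] ->
  Tsum [seq mono_mul a b | b <- g] ~ TMul (Tmono a) (Tsum g).
Proof.
elim: g => [|b g IH] // _.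
case: g IH => [|c g] IH; first by rewrite /= Tmono_mul.
rewrite map_cons (@Tsum_cons (mono_mul a b)) // IH // (@Tsum_cons b) // tmulDr Tmono_mul; done.
Qed.

Lemma Tsum_np_mul f g : f != [::] -> g != [::] ->
  Tsum (np_mul f g) ~ TMul (Tsum f) (Tsum g).
Proof.
move=> + gn; elim: f => [|a f IH] // _.
rewrite /np_mul /=.
case: f IH => [|b f] IH; first by rewrite cats0 Tsum_map.
rewrite Tsum_cat //; last first.
  by rewrite -/(np_mul _ _) np_mul_ne.
  by rewrite -size_eq0 size_map size_eq0.
rewrite Tsum_map // -/(np_mul _ _) IH //.
by rewrite sfeq_mulDl.
Qed.

Definition NP := (seq (mono n) * seq (mono n))%type.
Definition np_add (x y : NP) : NP := (np_mul x.1 y.2 ++ np_mul y.1 x.2, np_mul x.2 y.2).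
Definition np_mul2 (x y : NP) : NP := (np_mul x.1 y.1, np_mul x.2 y.2).
Definition np_one : NP := ([:: mono1 n], [:: mono1 n]).
Definition np_inv (x : NP) : NP := (x.2, x.1).
Definition NPops := @SFOps NP np_add np_mul2 np_one np_inv.

Fixpoint eval (t : T) : NP :=
  match t with
  | TVar i => ([:: mono_var i], [:: mono1 n])
  | TOne => np_one
  | TAdd a b => np_add (eval a) (eval b)
  | TMul a b => np_mul2 (eval a) (eval b)
  | TInv a => np_inv (eval a)
  end.

Lemma eval_ne t : (eval t).1 != [::] /\ (eval t).2 != [::].
Proof.
elim: t => [i||a [a1 a2] b [b1 b2]|a [a1 a2] b [b1 b2]|a [a1 a2]] //=;
  rewrite ?np_mul_ne //.
by split => //; rewrite -size_eq0 size_cat addn_eq0 negb_and size_eq0 np_mul_ne.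
Qed.

Definition Tnf (x : NP) := tdiv (Tsum x.1) (Tsum x.2).

Lemma nf t : t ~ Tnf (eval t).
Proof.
elim: t => [i||a IHa b IHb|a IHa b IHb|a IHa] /=.
- by rewrite /Tnf /tdiv /= Tmono_var Tmono1 tinv1 sfeq_mul1.
- by rewrite /Tnf /tdiv /= Tmono1 tinv1 sfeq_mul1.
- have [a1 a2] := eval_ne a; have [b1 b2] := eval_ne b.
  apply: sfeq_trans; first exact: sfeq_add IHa IHb.
  rewrite /Tnf tdiv_add /= Tsum_cat ?np_mul_ne // !Tsum_np_mul //.
- have [a1 a2] := eval_ne a; have [b1 b2] := eval_ne b.
  apply: sfeq_trans; first exact: sfeq_mul IHa IHb.
  by rewrite /Tnf tdiv_mul /= !Tsum_np_mul.
- apply: sfeq_trans; first exact: sfeq_inv IHa.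
  by rewrite /Tnf tdiv_inv.
Qed.

Lemma nf_complete t u :
  Permutation (np_mul (eval t).1 (eval u).2) (np_mul (eval u).1 (eval t).2) ->
  t ~ u.
Proof.
move=> h; rewrite (nf t) (nf u); apply: tdiv_eq.
have [t1 t2] := eval_ne t; have [u1 u2] := eval_ne u.
by rewrite -!Tsum_np_mul // (Tsum_perm h).
Qed.
End SF.

Section Scope_S2.
Local Open Scope ring_scope.



Section MP.
Variable n : nat.
Local Notation T := (sfterm n).

Definition tom (m : mono n) : 'X_{1..n} := [multinom m i | i < n].
Lemma tom_mul a b : tom (mono_mul a b) = (tom a + tom b)%MM.
Proof. by apply/mnmP => i; rewrite mnmDE !mnmE ffunE. Qed.
Lemma tom_inj : injective tom.
Proof. by move=> a b /mnmP h; apply/ffunP => i; have := h i; rewrite !mnmE. Qed.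
Lemma tom1 : tom (mono1 n) = 0%MM.
Proof. by apply/mnmP => i; rewrite mnmE mnm0E ffunE. Qed.

Definition phi (s : seq (mono n)) : {mpoly int[n]} := \sum_(m <- s) 'X_[tom m].

Lemma phi_cat s t : phi (s ++ t) = phi s + phi t.
Proof. by rewrite /phi big_cat. Qed.
Lemma phi_mul f g : phi (np_mul f g) = phi f * phi g.
Proof.
rewrite /phi /np_mul big_allpairs_dep mulr_suml; apply: eq_bigr => a _.
rewrite mulr_sumr; apply: eq_bigr => b _; by rewrite tom_mul mpolyXD.
Qed.
Lemma phi1 : phi [:: mono1 n] = 1.
Proof. by rewrite /phi big_seq1 tom1 mpolyX0. Qed.

Lemma phi_coeff m s : (phi s)@_(tom m) = (count_mem m s)%:R.
Proof.
rewrite /phi; elim: s => [|a s IH]; first by rewrite big_nil mcoeff0.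
rewrite big_cons mcoeffD IH mcoeffX /= natrD; congr (_ + _).
by rewrite (inj_eq tom_inj) eq_sym; case: (m == a).
Qed.

Lemma phi_perm s t : phi s = phi t -> perm_eq s t.
Proof.
move=> h; apply/allP => x _ /=; apply/eqP.
have := phi_coeff x s; rewrite h phi_coeff => /eqP; rewrite eqr_nat => /eqP ->.
done.
Qed.

Lemma phi_ne s : s != [::] -> phi s != 0.
Proof.
case: s => [|a s] // _; apply/eqP => /(congr1 (mcoeff (tom a))).
rewrite phi_coeff mcoeff0 /= eqxx => /eqP; rewrite pnatr_eq0. done.
Qed.

Definition Rel (t u : T) :=
  phi (eval t).1 * phi (eval u).2 = phi (eval u).1 * phi (eval t).2.

Lemma sound t u : sfeq t u -> Rel t u.
Proof.
rewrite /Rel.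
elim => {t u} /=; rewrite /np_add /np_mul2 /np_one /np_inv /=.
- by [].
- by move=> t u _ ->.
- move=> t u v _ h1 _ h2.
  have [_ u2] := eval_ne u.
  apply: (mulIf (phi_ne u2)).
  rewrite mulrAC h1 mulrAC h2; ring.
- move=> t tp u up _ h1 _ h2. rewrite !(phi_cat, phi_mul). ring: h1 h2.
- move=> t t' u u' _ h1 _ h2. rewrite !phi_mul. ring: h1 h2.
- move=> t t' _ h. ring: h.
- move=> x y z; rewrite !phi_mul; ring.
- move=> x y; rewrite !phi_mul; ring.
- move=> x; rewrite !phi_mul phi1; ring.
- move=> x; rewrite !phi_mul phi1; ring.
- move=> x y z; rewrite !(phi_cat, phi_mul); ring.
- move=> x y; rewrite !(phi_cat, phi_mul); ring.
- move=> x y z; rewrite !(phi_cat, phi_mul); ring.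
Qed.

Lemma perm_Permutation (A : eqType) (s t : seq A) : perm_eq s t -> Permutation s t.
Proof.
have remP : forall (x : A) (r : seq A), x \in r -> Permutation r (x :: rem x r).
  move=> x; elim => [|y r IH] // /= xr.
  case: (y =P x) => [->|ne] //.
  have xr' : x \in r by move: xr; rewrite inE; case: eqP => // e; case: ne.
  apply: Permutation_trans (perm_skip y (IH xr')) _.
  exact: perm_swap.
elim: s t => [|x s IH] t h.
- by move: h; rewrite perm_sym => /perm_nilP ->.
- have xt : x \in t by rewrite -(perm_mem h) mem_head.
  apply: Permutation_trans (Permutation_sym (remP _ _ xt)).
  apply: perm_skip; apply: IH.
  by rewrite -(perm_cons x) (seq.perm_trans h) // perm_to_rem.
Qed.

Lemma sound_perm (t u : T) : sfeq t u ->
  Permutation (np_mul (eval t).1 (eval u).2) (np_mul (eval u).1 (eval t).2).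
Proof.
move/sound; rewrite /Rel -!phi_mul => /phi_perm; exact: perm_Permutation.
Qed.
End MP.

End Scope_S2.


Section PAlg.
Variable P : semifield.
Local Notation "x *' y" := (@sf_mul P x y) (at level 40, left associativity).
Local Notation "x +' y" := (@sf_add P x y) (at level 50, left associativity).
Local Notation one := (@sf_one P).
Local Notation inv := (@sf_inv P).

Lemma pmul1l (x : P) : one *' x = x.
Proof. by rewrite sf_mulC sf_mul1. Qed.
Lemma pmulCA (x y z : P) : x *' (y *' z) = y *' (x *' z).
Proof. by rewrite sf_mulA (sf_mulC x y) -sf_mulA. Qed.
Lemma pmulAC (x y z : P) : x *' y *' z = x *' z *' y.
Proof. by rewrite -sf_mulA (sf_mulC y) sf_mulA. Qed.
Lemma pmulACA (x y z w : P) : (x *' y) *' (z *' w) = (x *' z) *' (y *' w).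
Proof. by rewrite -!sf_mulA (pmulCA y z). Qed.
Lemma pmulVl (x : P) : inv x *' x = one.
Proof. by rewrite sf_mulC sf_mulV. Qed.
Lemma pinv_uniq (x y : P) : x *' y = one -> y = inv x.
Proof. move=> h. by rewrite -(pmul1l y) -(pmulVl x) -sf_mulA h sf_mul1. Qed.
Lemma pinv1 : inv one = one.
Proof. by symmetry; apply: pinv_uniq; rewrite sf_mul1. Qed.
Lemma pinvM (x y : P) : inv (x *' y) = inv x *' inv y.
Proof. by symmetry; apply: pinv_uniq; rewrite pmulACA !sf_mulV sf_mul1. Qed.
Lemma pmulK (x c : P) : x *' c *' inv c = x.
Proof. by rewrite -sf_mulA sf_mulV sf_mul1. Qed.
Lemma pmulIr (x y c : P) : x *' c = y *' c -> x = y.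
Proof. by move=> h; rewrite -(pmulK x c) h pmulK. Qed.

Local Notation expz := (@o_expz (ops_of P)).

Lemma piterM (x y : P) k :
  iter k (sf_mul (x *' y)) one = iter k (sf_mul x) one *' iter k (sf_mul y) one.
Proof. elim: k => [|k IH] /=; first by rewrite sf_mul1. by rewrite IH pmulACA. Qed.
Lemma piter1 k : iter k (sf_mul one) one = one.
Proof. elim: k => [|k IH] /=; first by []. by rewrite IH sf_mul1. Qed.

Lemma pexpzM (x y : P) z : expz (x *' y) z = expz x z *' expz y z.
Proof.
case: z => k /=; first exact: piterM.
have := piterM x y k.+1; rewrite /= => ->; exact: pinvM.
Qed.
Lemma pexpz1 z : expz one z = one.
Proof.
case: z => k /=; first exact: piter1.
have := piter1 k.+1; rewrite /= => ->; exact: pinv1.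
Qed.

Variable n : nat.
Fixpoint interp (rho : 'I_n -> P) (t : sfterm n) : P :=
  match t with
  | TVar i => rho i
  | TOne => one
  | TAdd a b => interp rho a +' interp rho b
  | TMul a b => interp rho a *' interp rho b
  | TInv a => inv (interp rho a)
  end.

Lemma interp_sound rho t u : sfeq t u -> interp rho t = interp rho u.
Proof.
elim => {t u} /=; intros; try congruence;
  first [exact: sf_mulA| exact: sf_mulC| exact: sf_mul1| exact: sf_mulV| exact: sf_addA| exact: sf_addC| exact: sf_mulDl].
Qed.

Variable p0 : 'I_n -> P.
Definition pw (m : mono n) : P := interp p0 (Tmono m).
Lemma pw_mul a b : pw (mono_mul a b) = pw a *' pw b.
Proof. exact: interp_sound (Tmono_mul a b). Qed.
Lemma pw1 : pw (mono1 n) = one.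
Proof. exact: interp_sound (Tmono1 n). Qed.
Lemma pw_var i : pw (mono_var i) = p0 i.
Proof. exact: interp_sound (Tmono_var i). Qed.

End PAlg.


Section Hom.
Variables (n : nat) (S : sfops) (h : sfterm n -> S).
Hypothesis hA : forall a b, h (TAdd a b) = o_add (h a) (h b).
Hypothesis hM : forall a b, h (TMul a b) = o_mul (h a) (h b).
Hypothesis h1 : h TOne = o_one S.
Hypothesis hI : forall a, h (TInv a) = o_inv (h a).

Lemma hom_iter x k :
  h (iter k (TMul x) TOne) = iter k (o_mul (h x)) (o_one S).
Proof. elim: k => [|k IH] /=; first exact: h1. by rewrite hM IH. Qed.

Lemma hom_expz x z : h (o_expz (S := Qsf_ops n) x z) = o_expz (h x) z.
Proof.
case: z => k; first exact: hom_iter.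
by rewrite /= hI hM hom_iter.
Qed.

Lemma hom_mut_y k B (y : 'I_n -> sfterm n) j :
  h (mut_y (S := Qsf_ops n) k B y j) = mut_y (S := S) k B (fun i => h (y i)) j.
Proof.
rewrite /mut_y; case: (j == k); first exact: hI.
by rewrite hM hom_expz hA h1 hom_expz.
Qed.
End Hom.

Lemma mut_y_ext (S : sfops) n k B (y y' : 'I_n -> S) :
  y =1 y' -> mut_y k B y =1 mut_y k B y'.
Proof. by move=> e j; rewrite /mut_y !e. Qed.

Section Rep.
Variables (P : semifield) (n : nat) (p0 : 'I_n -> P).
Local Notation "x *' y" := (@sf_mul P x y) (at level 40, left associativity).
Local Notation "x +' y" := (@sf_add P x y) (at level 50, left associativity).
Local Notation one := (@sf_one P).
Local Notation inv := (@sf_inv P).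
Local Notation pexpz := (@o_expz (ops_of P)).

Definition Lmap (c : P) (f : seq (mono n)) : Defs.qpoly P n :=
  [seq (c *' pw p0 m, m) | m <- f].

Lemma Lmap_mul c d f g :
  Defs.qpoly_mul (Lmap c f) (Lmap d g) = Lmap (c *' d) (np_mul f g).
Proof.
rewrite /Defs.qpoly_mul /Lmap /np_mul allpairs_mapl allpairs_mapr map_allpairs.
by apply: eq_allpairs => a b /=; rewrite pw_mul pmulACA.
Qed.

Definition qrep (x : qpsf P n) (X : NP n) (r : P) :=
  exists c, x = (Lmap c X.1, Lmap (c *' r) X.2).

Lemma qrep_mul x X r y Y r' : qrep x X r -> qrep y Y r' ->
  qrep (qp_mul x y) (np_mul2 X Y) (r *' r').
Proof.
move=> [c ->] [c' ->]; exists (c *' c').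
by rewrite /qp_mul /= !Lmap_mul pmulACA.
Qed.

Lemma qrep_inv x X r : qrep x X r -> qrep (qp_inv x) (np_inv X) (inv r).
Proof. by move=> [c ->]; exists (c *' r); rewrite /qp_inv /= pmulK. Qed.

Lemma qrep_one : qrep (qp_one P n) (np_one n) one.
Proof. by exists one; rewrite /qp_one /Lmap /= pw1 !sf_mul1. Qed.

Lemma qrep_const a : qrep (qp_const n a) (np_one n) (inv a).
Proof. by exists a; rewrite /qp_const /Lmap /= pw1 !sf_mul1 sf_mulV. Qed.

Lemma qrep_add x X y Y r : qrep x X r -> qrep y Y r ->
  qrep (qp_add x y) (np_add X Y) r.
Proof.
move=> [c ->] [c' ->]; exists (c *' (c' *' r)).
rewrite /qp_add /Defs.qpoly_add /= !Lmap_mul.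
have -> : c' *' (c *' r) = c *' (c' *' r) by rewrite pmulCA.
by rewrite /Lmap map_cat pmulAC sf_mulA.
Qed.

Lemma qrep_iter x X r k : qrep x X r ->
  qrep (iter k (qp_mul x) (qp_one P n)) (iter k (np_mul2 X) (np_one n))
       (iter k (sf_mul r) one).
Proof.
move=> h; elim: k => [|k IH] /=; first exact: qrep_one.
exact: qrep_mul h IH.
Qed.

Lemma qrep_expz x X r z : qrep x X r ->
  qrep (o_expz (S := QPsf_ops P n) x z) (o_expz (S := NPops n) X z) (pexpz r z).
Proof.
move=> h; case: z => k /=; first exact: qrep_iter.
apply: qrep_inv; exact: (qrep_iter k.+1 h).
Qed.

End Rep.

Section Scope_S5.
Local Open Scope ring_scope.



Section PFacts.
Variable P : semifield.
Local Notation "x *' y" := (@sf_mul P x y) (at level 40, left associativity).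
Local Notation "x +' y" := (@sf_add P x y) (at level 50, left associativity).
Local Notation one := (@sf_one P).
Local Notation inv := (@sf_inv P).
Local Notation pexpz := (@o_expz (ops_of P)).

Lemma pinvK (x : P) : inv (inv x) = x.
Proof. by symmetry; apply: pinv_uniq; rewrite pmulVl. Qed.

Lemma brk_F1 (q : P) (b : int) :
  inv (o_brk (S := ops_of P) q (- b)) *' pexpz q (- sgz b) =
  inv (o_brk (S := ops_of P) q b).
Proof.
rewrite /o_brk /o_plus /o_minus /=.
case: (ltrgtP b 0) => hb.
- rewrite oppr_lt0 (ltNge 0 b) (le_eqVlt b 0) hb orbT /= oppr_eq0 (lt_eqF hb).
  rewrite (ltr0_sgz hb) /=.
  by rewrite pinvM pinvK sf_mul1 pmulAC pmulVl pmul1l.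
- have -> : (- b < 0) = true by rewrite oppr_lt0.
  rewrite /= (gtr0_sgz hb) /=.
  by rewrite pinvK sf_mul1 pinvM pinvK sf_mulC.
- by rewrite hb /= pinv1 sf_mul1.
Qed.

Lemma brk_F2 (q : P) (b : int) :
  pexpz (inv (o_brk (S := ops_of P) q b)) (- b) =
  pexpz (one +' pexpz q (- sgz b)) (- b).
Proof.
rewrite /o_brk /o_plus /o_minus /=.
case: (ltrgtP b 0) => hb.
- by rewrite (ltr0_sgz hb) /= pinvK sf_mul1 sf_addC.
- rewrite (gtr0_sgz hb) /= sf_mul1 pinvM pinvK sf_mulC sf_mulDl sf_mulV pmul1l.
  done.
- by rewrite hb.
Qed.
End PFacts.

Lemma np_mul1l n (f : seq (mono n)) : np_mul [:: mono1 n] f = f.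
Proof.
rewrite /np_mul /= cats0; elim: f => [|a f IH] //=; rewrite IH; congr (_ :: _).
by apply/ffunP => i; rewrite !ffunE add0n.
Qed.
Lemma np_mul2_1l n (X : NP n) : np_mul2 (np_one n) X = X.
Proof. by case: X => a b; rewrite /np_mul2 /= !np_mul1l. Qed.

Section Main.
Variables (P : semifield) (n : nat) (p0 : 'I_n -> P).
Local Notation "x *' y" := (@sf_mul P x y) (at level 40, left associativity).
Local Notation one := (@sf_one P).
Local Notation inv := (@sf_inv P).
Local Notation pexpz := (@o_expz (ops_of P)).

Definition Inv (sc : ('I_n -> QPsf_ops P n) * ('I_n -> P) * 'M[int]_n)
  (st : ('I_n -> Qsf_ops n) * 'M[int]_n) :=
  [/\ sc.2 = st.2, (forall j, sc.1.2 j = interp p0 (st.1 j)) &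
      (forall j, qrep p0 (sc.1.1 j) (eval (st.1 j)) (interp p0 (st.1 j)))].

Lemma Inv_step k sc st : Inv sc st ->
  Inv (mut_yc k sc) (mut_y k st.2 st.1, mut_mx k st.2).
Proof.
case: sc => [[y p] B]; case: st => [t B']; rewrite /Inv /= => [[<- hp hy]].
split => // j.
- rewrite (@hom_mut_y _ (ops_of P) (interp p0)) //.
  exact: (@mut_y_ext (ops_of P) n k B p (fun i => interp p0 (t i)) hp j).
- rewrite (@hom_mut_y _ (ops_of P) (interp p0)) //.
  rewrite (@hom_mut_y _ (NPops n) (@eval n)) //.
  rewrite /mut_y; case: (j == k).
  + exact: qrep_inv (hy k).
  + rewrite hp.
    have H1 := qrep_mul (qrep_const p0 (o_brk (S := ops_of P) (interp p0 (t k)) (- B k j)))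
                         (qrep_expz (- sgz (B k j)) (hy k)).
    rewrite np_mul2_1l brk_F1 in H1.
    have H2 := qrep_add (qrep_const p0 (o_brk (S := ops_of P) (interp p0 (t k)) (B k j))) H1.
    have H3 := qrep_expz (- B k j) H2.
    rewrite brk_F2 in H3.
    exact: qrep_mul (hy j) H3.
Qed.

Lemma Inv_foldl w sc st : Inv sc st ->
  Inv (foldl (fun s k => mut_yc k s) sc w)
      (foldl (fun s k => (mut_y k s.2 s.1, mut_mx k s.2)) st w).
Proof. elim: w sc st => [|k w IH] sc st h //=; apply: IH; exact: Inv_step. Qed.

Lemma Inv_init B0 : Inv ((fun i => qp_var P i), p0, B0) ((fun i => TVar i : Qsf_ops n), B0).
Proof.
split => //= j; exists (inv (p0 j)).
by rewrite /qp_var /Lmap /= pw_var pw1 sf_mul1 pmulVl.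
Qed.

Lemma Inv_pattern B0 w : Inv (YCpattern B0 p0 w) (Ypattern B0 w).
Proof. exact: Inv_foldl (Inv_init B0). Qed.

End Main.

End Scope_S5.


Lemma perm_map_seq (A B : Type) (f : A -> B) (l l' : seq A) :
  Permutation l l' -> Permutation (map f l) (map f l').
Proof.
elim => /= [|x l1 l2 _ IH|x y l0|l1 l2 l3 _ IH1 _ IH2].
- by [].
- exact: perm_skip.
- exact: perm_swap.
- exact: Permutation_trans IH1 IH2.
Qed.

Lemma map_ListDef (A B : Type) (f : A -> B) (l : seq A) : map f l = ListDef.map f l.
Proof. by elim: l => //= a l ->. Qed.

Lemma perm_map_inj (A B : Type) (f : A -> B) (l l' : seq A) : injective f ->
  Permutation (map f l) (map f l') -> Permutation l l'.
Proof.
move=> finj; rewrite (map_ListDef f l') => /Permutation_map_inv [l3 [e p]].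
rewrite -map_ListDef in e; have := inj_map finj e => ->.
exact: Permutation_sym.
Qed.

Lemma In_map_seq (A B : Type) (f : A -> B) (l : seq A) x :
  List.In x (map f l) -> exists y, f y = x /\ List.In y l.
Proof.
elim: l => [|a l IH] //= [<-|h]; first by exists a; split => //; left.
by have [y [e h']] := IH h; exists y; split => //; right.
Qed.

Lemma Lmap_const (P : semifield) n (p0 : 'I_n -> P) c c' f g :
  f != [::] -> Permutation (Lmap p0 c f) (Lmap p0 c' g) -> c = c'.
Proof.
case: f => [|m f] // _ h.
have hin : List.In (sf_mul c (pw p0 m), m) (Lmap p0 c' g).
  apply: (Permutation_in _ h); by left.
have [y [e _]] := @In_map_seq _ _ (fun m0 => (sf_mul c' (pw p0 m0), m0)) g _ hin.
case: e => e1 e2; subst y.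
by symmetry; exact: pmulIr e1.
Qed.

Theorem mainTheorem3 (P : semifield) (n : nat) (B0 : 'M[int]_n)
  (hB0 : skew_symmetrizable B0) (p0 : 'I_n -> P)
  (v v' : seq 'I_n) (hv : reduced v) (hv' : reduced v') (i j : 'I_n) :
  sfeq (Y B0 v i) (Y B0 v' j) <-> qp_eq (Ytil B0 p0 v i) (Ytil B0 p0 v' j).
Proof.
have [_ _ hyv] := Inv_pattern p0 B0 v.
have [_ _ hyv'] := Inv_pattern p0 B0 v'.
move: (hyv i) (hyv' j); rewrite /Ytil /Y.
case=> c ex [c' ey]; rewrite /qp_eq ex ey /= !Lmap_mul.
move: ((Ypattern B0 v).1 i) ((Ypattern B0 v').1 j) => t u.
split.
- move=> h; have e := interp_sound p0 h.
  rewrite -e pmulCA; apply: perm_map_seq; exact: sound_perm h.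
- move=> h; apply: nf_complete.
  have [t1 t2] := eval_ne t; have [u1 u2] := eval_ne u.
  have ec := Lmap_const (np_mul_ne t1 u2) h.
  rewrite ec in h; apply: perm_map_inj h.
  by move=> a b [].
Qed.
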